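(* Consider scheduling games on two identical machines of speed $1$ with arbitrary priority lists in which all jobs have negative deterioration (with no restriction relating $a_i$ to the machine speeds). (a) Every such game with exactly two jobs has a pure Nash equilibrium. (b) There exists such a game with three jobs that has no pure Nash equilibrium; for instance, the game with jobs $u,v,w$ with $p_u(t)=\max\{5-1.05t,0.2\}$, $p_v(t)=\max\{4-1.1t,0.2\}$, $p_w(t)=\max\{3-1.2t,0.2\}$ and priority lists $\pi_1=(v,u,w)$, $\pi_2=(w,u,v)$.
   Context: Scheduling game: a finite set $N$ of $n\ge1$ jobs (players) and a set $M$ of machines. Machine $j$ has speed $s_j>0$ and a priority list $\pi_j$, a bijection $N\to\{1,\dots,n\}$; job $u$ has higher priority than $v$ on $j$ iff $\pi_j(u)<\pi_j(v)$ (a list written $(x,y,z)$ gives $x$ the highest priority). A job with negative deterioration has processing-time function $p_i(t)=\max\{\tau_i,b_i-a_it\}$ ($b_i,a_i\ge0$, $\tau_i>0$). A profile $\sigma\in M^N$ assigns each job to a machine. On machine $j$, the jobs assigned to it, listed in increasing $\pi_j$-order as $i_1,i_2,\dots$, are processed without idle time: $S_{i_1}(\sigma)=0$, $C_{i_k}(\sigma)=S_{i_k}(\sigma)+p_{i_k}(S_{i_k}(\sigma))/s_j$, $S_{i_{k+1}}(\sigma)=C_{i_k}(\sigma)$. The cost of job $i$ is $C_i(\sigma)$. A pure Nash equilibrium (NE) is a profile in which no job can strictly decrease its completion time by unilaterally changing its machine. *)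

(* Defs.v *)
From HB Require Import structures.
From mathcomp Require Import all_boot all_order all_algebra.
From mathcomp Require Import reals.
Set Implicit Arguments. Unset Strict Implicit. Unset Printing Implicit Defensive.
Import Order.TTheory GRing.Theory Num.Theory.
Local Open Scope ring_scope.

Section SchedulingGame.
Variable R : realType.

Record ndjob := NDJob { nd_tau : R; nd_b : R; nd_a : R }.

Definition valid_ndjob (x : ndjob) : Prop :=
  0 < nd_tau x /\ 0 <= nd_b x /\ 0 <= nd_a x.

Definition proc_time (x : ndjob) (t : R) : R :=
  Num.max (nd_tau x) (nd_b x - nd_a x * t).

Variables (J M : finType).

(* Priority list of machine j: a bijection J -> {1,..,n}; smaller = higher priority. *)
Definition priority_list (pi : J -> nat) : Prop :=
  injective pi /\ forall k, (1 <= pi k <= #|J|)%N.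

Fixpoint completions (p : J -> R -> R) (s t : R) (l : seq J) : seq R :=
  match l with
  | [::] => [::]
  | i :: l' => let c := t + p i t / s in c :: completions p s c l'
  end.

Variables (jobs : J -> ndjob) (speed : M -> R) (pi : M -> J -> nat).

Definition machine_seq (sigma : J -> M) (j : M) : seq J :=
  sort (fun u v => (pi j u <= pi j v)%N) [seq k <- enum J | sigma k == j].

Definition completion (sigma : J -> M) (i : J) : R :=
  let l := machine_seq sigma (sigma i) in
  nth 0 (completions (fun k => proc_time (jobs k)) (speed (sigma i)) 0 l)
      (index i l).

Definition deviate (sigma : J -> M) (i : J) (j : M) : J -> M :=
  fun k => if k == i then j else sigma k.

Definition pure_NE (sigma : J -> M) : Prop :=
  forall (i : J) (j : M), ~ (completion (deviate sigma i j) i < completion sigma i).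

End SchedulingGame.

(* The three-job example: u = 0, v = 1, w = 2; machine 1 = 0, machine 2 = 1. *)
Definition ex_jobs (R : realType) (k : 'I_3) : ndjob R :=
  match nat_of_ord k with
  | 0%N => NDJob (1 / 5) 5 (21 / 20)
  | 1%N => NDJob (1 / 5) 4 (11 / 10)
  | _ => NDJob (1 / 5) 3 (6 / 5)
  end.

(* pi_1 = (v,u,w), pi_2 = (w,u,v) *)
Definition ex_pi (j : 'I_2) (k : 'I_3) : nat :=
  if nat_of_ord j == 0%N then nth 0%N [:: 2; 1; 3]%N k
  else nth 0%N [:: 2; 3; 1]%N k.

(* Main.v *)
Require Import Defs.
From HB Require Import structures.
From mathcomp Require Import all_boot all_order all_algebra.
From mathcomp Require Import reals lra.
From Stdlib Require Import FunctionalExtensionality.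
Import Order.TTheory GRing.Theory Num.Theory.
Local Open Scope ring_scope.
Set Implicit Arguments. Unset Strict Implicit.

Lemma machine_seqE (J M : finType) (pi : M -> J -> nat) (sigma : J -> M) (j : M) (l : seq J) :
  injective (pi j) -> perm_eq (enum J) l ->
  machine_seq pi sigma j = sort (fun u v => (pi j u <= pi j v)%N) [seq k <- l | sigma k == j].
Proof.
move=> inj hp; rewrite /machine_seq; apply/perm_sortP.
- by move=> u v; apply: leq_total.
- by move=> u v w; apply: leq_trans.
- by move=> u v /andP [h1 h2]; apply: inj; apply/eqP; rewrite eqn_leq h1 h2.
- by apply: perm_filter.
Qed.

Section Two.
Variables (R : realType) (J M : finType) (jobs : J -> ndjob R) (pi : M -> J -> nat).
Hypothesis inj : forall j, injective (pi j).

Definition C1 i := 0 + proc_time (jobs i) 0 / 1.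
Definition C2 i k := C1 k + proc_time (jobs i) (C1 k) / 1.

Lemma two_completion (sigma : J -> M) (i k : J) :
  i != k -> perm_eq (enum J) [:: i; k] ->
  completion jobs (fun _ => 1) pi sigma i =
  if (sigma k == sigma i) && (pi (sigma i) k < pi (sigma i) i)%N then C2 i k else C1 i.
Proof.
move=> ik hp; rewrite /completion (machine_seqE _ (@inj (sigma i)) hp) /= eqxx.
case: (sigma k == sigma i) => /=.
- rewrite /sort /= leqNgt; case: ltnP => h /=.
  + by rewrite eq_sym (negbTE ik) eqxx.
  + by rewrite eqxx.
- by rewrite eqxx.
Qed.


Variables (x y : J).
Hypotheses (hxy : x != y) (px : perm_eq (enum J) [:: x; y]) (py : perm_eq (enum J) [:: y; x]).

Lemma all_xy t : t = x \/ t = y.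
Proof.
have : t \in [:: x; y] by rewrite -(perm_mem px) mem_enum.
by rewrite !inE => /orP [/eqP|/eqP]; auto.
Qed.

Lemma NE_stack (j : M) : (pi j y < pi j x)%N -> C2 x y < C1 x ->
  pure_NE jobs (fun _ => 1) pi (fun _ => j).
Proof.
have hyx : y != x by rewrite eq_sym.
move=> h1 h2 i j'; case: (all_xy i) => ->.
- rewrite !(two_completion _ hxy px) /deviate eqxx (negbTE hyx) eqxx h1 /=.
  case: ifP => _; first by rewrite ltxx.
  by move=> h3; have := lt_trans h2 h3; rewrite ltxx.
- have h4 : (pi j x < pi j y)%N = false by rewrite ltnNge ltnW.
  rewrite !(two_completion _ hyx py) /deviate eqxx (negbTE hxy) eqxx h4 /=.
  by case: eqP => [<-|_] /=; rewrite ?h4 ltxx.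
Qed.

Lemma NE_split (j0 j1 : M) : j0 != j1 ->
  (forall j, (pi j y < pi j x)%N -> ~ C2 x y < C1 x) ->
  (forall j, (pi j x < pi j y)%N -> ~ C2 y x < C1 y) ->
  pure_NE jobs (fun _ => 1) pi (fun t => if t == x then j0 else j1).
Proof.
have hyx : y != x by rewrite eq_sym.
move=> j01 Hx Hy i j'; case: (all_xy i) => ->.
  rewrite !(two_completion _ hxy px) /deviate eqxx (negbTE hyx).
  rewrite [j1 == j0]eq_sym (negbTE j01) /=.
  case: ifP => [/andP[_ h]|_]; [exact: Hx h | by rewrite ltxx].
- rewrite !(two_completion _ hyx py) /deviate eqxx (negbTE hxy) ?eqxx ?(negbTE hyx).
  rewrite (negbTE j01) /=.
  case: ifP => [/andP[_ h]|_]; [exact: Hy h | by rewrite ltxx].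
Qed.
End Two.

Lemma partA (R : realType) (J : finType) (jobs : J -> ndjob R) (pi : 'I_2 -> J -> nat) :
  #|J| = 2%N -> (forall j, priority_list (pi j)) ->
  exists sigma : J -> 'I_2, pure_NE jobs (fun _ => 1) pi sigma.
Proof.
move=> hc hpl; have inj : forall j, injective (pi j) by move=> j; case: (hpl j).
have hs : size (enum J) = 2%N by rewrite -cardT.
have hu := enum_uniq J.
case E: (enum J) hs hu => [|x [|y [|? ?]]] // _.
rewrite /= inE andbT => hxy.
have px : perm_eq (enum J) [:: x; y] by rewrite E.
have py : perm_eq (enum J) [:: y; x] by rewrite E; apply/permP => p /=; rewrite addnCA.
case: (boolP [exists j : 'I_2, (pi j y < pi j x)%N && (C2 jobs x y < C1 jobs x)]).
  by move=> /existsP [j /andP [h1 h2]]; exists (fun _ => j); exact: (NE_stack inj hxy px py h1 h2).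
move=> Hnx.
case: (boolP [exists j : 'I_2, (pi j x < pi j y)%N && (C2 jobs y x < C1 jobs y)]).
  move=> /existsP [j /andP [h1 h2]]; exists (fun _ => j).
  by apply: (NE_stack inj _ py px h1 h2); rewrite eq_sym.
move=> Hny; exists (fun t => if t == x then (ord0 : 'I_2) else ord_max).
apply: (NE_split inj hxy px py) => // j h1 h2.
- by apply: (negP Hnx); apply/existsP; exists j; rewrite h1 h2.
- by apply: (negP Hny); apply/existsP; exists j; rewrite h1 h2.
Qed.


Definition o0 : 'I_3 := @Ordinal 3 0 isT.
Definition o1 : 'I_3 := @Ordinal 3 1 isT.
Definition o2 : 'I_3 := @Ordinal 3 2 isT.
Definition m0 : 'I_2 := @Ordinal 2 0 isT.
Definition m1 : 'I_2 := @Ordinal 2 1 isT.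
Definition g3 (a b c : 'I_2) (k : 'I_3) : 'I_2 :=
  match nat_of_ord k with 0%N => a | 1%N => b | _ => c end.
Lemma perm3 : perm_eq (enum 'I_3) [:: o0; o1; o2].
Proof.
apply: uniq_perm; first exact: enum_uniq; first by [].
by move=> [[|[|[|?]]] ?]; rewrite mem_enum //= ?inE; apply/esym/idP; rewrite -?(inj_eq val_inj) /=.
Qed.
Lemma ex_inj j : injective (ex_pi j).
Proof.
move=> [[|[|[|?]]] ?] [[|[|[|?]]] ?] //; rewrite /ex_pi /=; case: (nat_of_ord j == 0%N) => //= _; apply: val_inj => //.
Qed.
Lemma ex_seqE sigma j : machine_seq ex_pi sigma j = sort (fun u v => (ex_pi j u <= ex_pi j v)%N) [seq k <- [:: o0; o1; o2] | sigma k == j].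
Proof. exact: (machine_seqE sigma (@ex_inj j) perm3). Qed.

Ltac simp_max := repeat match goal with |- context [Num.max ?a ?b] =>
  (rewrite (@max_r _ _ a b); last by lra) || (rewrite (@max_l _ _ a b); last by lra) end.

Ltac dev i j := move/(_ i j); apply;
  rewrite /completion !ex_seqE /= /proc_time /ex_jobs /= !divr1 !add0r ?mulr0 ?subr0;
  simp_max; lra.

Lemma ex_noNE (R : realType) (a b c : 'I_2) :
  ~ pure_NE (ex_jobs R) (fun _ => 1) ex_pi (g3 a b c).
Proof.
case: a => [[|[|?]] pa] //; case: b => [[|[|?]] pb] //; case: c => [[|[|?]] pc] //.
- dev o2 m1.
- dev o1 m1.
- dev o2 m1.
- dev o0 m1.
- dev o0 m0.
- dev o0 m0.
- dev o1 m0.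
- dev o1 m0.
Qed.

Lemma ex_all (R : realType) (sigma : 'I_3 -> 'I_2) :
  ~ pure_NE (ex_jobs R) (fun _ => 1) ex_pi sigma.
Proof.
have -> : sigma = g3 (sigma o0) (sigma o1) (sigma o2).
  by apply: functional_extensionality => -[[|[|[|?]]] p] //=; congr sigma; apply: val_inj.
exact: ex_noNE.
Qed.

Lemma ex_valid (R : realType) i : valid_ndjob (ex_jobs R i).
Proof. by case: i => [[|[|[|?]]] ?]; rewrite /valid_ndjob /ex_jobs /=; (split; [lra | split; lra]). Qed.

Lemma ex_prio j : priority_list (ex_pi j).
Proof.
split; first exact: ex_inj.
by move=> [[|[|[|?]]] ?] //; rewrite card_ord /ex_pi; case: (nat_of_ord j == 0%N).
Qed.

Theorem theorem6 (R : realType) :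
  (forall (J : finType) (jobs : J -> ndjob R) (pi : 'I_2 -> J -> nat),
      #|J| = 2%N ->
      (forall i, valid_ndjob (jobs i)) ->
      (forall j, priority_list (pi j)) ->
      exists sigma : J -> 'I_2, pure_NE jobs (fun _ => 1) pi sigma)
  /\
  (exists (J : finType) (jobs : J -> ndjob R) (pi : 'I_2 -> J -> nat),
      [/\ #|J| = 3%N, (forall i, valid_ndjob (jobs i)),
          (forall j, priority_list (pi j)) &
          forall sigma : J -> 'I_2, ~ pure_NE jobs (fun _ => 1) pi sigma])
  /\
  ((forall i, valid_ndjob (ex_jobs R i)) /\
   (forall j, priority_list (ex_pi j)) /\
   forall sigma : 'I_3 -> 'I_2, ~ pure_NE (ex_jobs R) (fun _ => 1) ex_pi sigma).
Proof.
split; first by move=> J jobs pi hc _ hp; exact: partA.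
split.
  exists ('I_3 : finType), (ex_jobs R), ex_pi; split.
  - exact: card_ord.
  - exact: ex_valid.
  - exact: ex_prio.
  - exact: ex_all.
split; [exact: ex_valid | split; [exact: ex_prio | exact: ex_all]].
Qed.
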